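(* Let $q$ be a prime power, $m\geq1$, $n\geq2$, and let $r=(r_1,\ldots,r_n)\in\mathbb{F}_{q^m}^n$ with $\mathbb{F}_q(r_1,\ldots,r_n)=\mathbb{F}_{q^m}$. Let $m_i=[\mathbb{F}_q(r_i):\mathbb{F}_q]$ and suppose $m_1\geq m_2\geq\cdots\geq m_n$ with at least one strict inequality. Then there exists $f\in\mathbb{F}_q[X_1,\ldots,X_{n-1}]$ such that $[\mathbb{F}_q(r_n+f(r_1,\ldots,r_{n-1})):\mathbb{F}_q]>m_n$. *)

(* Defs.v *)
From HB Require Import structures.
From mathcomp Require Import all_boot all_order all_algebra all_field.
From mathcomp Require Import mpoly.
Set Implicit Arguments. Unset Strict Implicit. Unset Printing Implicit Defensive.
Import GRing.Theory.
Local Open Scope ring_scope.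

Definition elt_degree (F : fieldType) (L : fieldExtType F) (x : L) : nat :=
  \dim <<1; x>>%VS.

Definition mpoly_eval (F : fieldType) (L : fieldExtType F) (k : nat)
  (f : {mpoly F[k]}) (v : 'I_k -> L) : L :=
  mmap (in_alg L) v f.

(* Main.v *)
Require Import Defs.
From HB Require Import structures.
From mathcomp Require Import all_boot all_order all_algebra all_field.
From mathcomp Require Import mpoly zify.
Local Open Scope ring_scope.
Import GRing.Theory.

Section S.
Variables (F : finFieldType) (L : fieldExtType F).
Local Notation q := #|F|.

Definition Pd (d : nat) : {poly L} := \prod_(k < d) ('X^(q ^ k.+1) - 'X).

Lemma q_gt1 : (1 < q)%N.
Proof. exact: finNzRing_gt1. Qed.

Lemma elt_degree_gt0 (w : L) : (0 < elt_degree w)%N.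
Proof. exact: (adim_gt0 <<1; w>>%AS). Qed.

Lemma fermat_elt (w : L) : w ^+ (q ^ elt_degree w) = w.
Proof.
apply/eqP; rewrite -(Fermat's_little_theorem <<1; w>>%AS w).
exact: memv_adjoin.
Qed.

Lemma Pd_prop d : [/\ Pd d != 0, (size (Pd d) <= (\sum_(k < d) q ^ k.+1).+1)%N
  & forall w, (elt_degree w <= d)%N -> root (Pd d) w].
Proof.
elim: d => [|d [nz sz rt]].
  rewrite /Pd big_ord0 oner_neq0 size_poly1; split => // w.
  by rewrite leqn0 => /eqP h; have := elt_degree_gt0 w; rewrite h.
have qg := q_gt1.
have m2 : (2 <= q ^ d.+1)%N.
  have h : (0 < q ^ d)%N by rewrite expn_gt0; lia.
  rewrite expnS; nia.
have szX : size ('X^(q ^ d.+1) - 'X : {poly L}) = (q ^ d.+1).+1.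
  by rewrite size_addl size_polyXn // size_opp size_polyX.
have nzX : ('X^(q ^ d.+1) - 'X : {poly L}) != 0 by rewrite -size_poly_eq0 szX.
rewrite /Pd big_ord_recr /= -/(Pd d); split.
- by rewrite mulf_neq0.
- rewrite size_mul // szX big_ord_recr /=. idtac.
  by rewrite addnS /= -addSn leq_add2r.
- move=> w; rewrite leq_eqVlt ltnS => /orP[/eqP hw|hw]; rewrite rootM.
    by apply/orP; right; rewrite /root !hornerE -hw fermat_elt subrr.
  by rewrite rt.
Qed.

Lemma sum_bound d : ((\sum_(k < d) q ^ k.+1).+2 <= q ^ d.+1)%N.
Proof.
have qg := q_gt1.
elim: d => [|d IH]; first by rewrite big_ord0 expn1.
rewrite big_ord_recr /= [X in (_ <= X)%N]expnS.
move: IH; set s := (\sum_(_ < _) _)%N; set t := (q ^ d.+1)%N => IH.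
have : (2 * t <= #|F| * t)%N by rewrite leq_mul2r qg orbT.
clearbody s t; move: (#|F|) => Q *; lia.
Qed.

Lemma key (z x : L) : (elt_degree z < elt_degree x)%N ->
  exists2 y, y \in <<1; x>>%VS & (elt_degree z < elt_degree (z + y))%N.
Proof.
move=> hzx; set V := <<1; x>>%VS.
case: (boolP [exists y : finvect_type L, (y \in V) && (elt_degree z < elt_degree (z + y))%N]).
  by case/existsP=> y /andP[h1 h2]; exists y.
rewrite negb_exists => /forallP hall.
have cardV := card_vspace (V : {vspace finvect_type L}).
rewrite cardE in cardV.
set S := enum _ in cardV.
pose rs := [seq z + (y : L) | y <- S].
have [nz sz rt] := Pd_prop (elt_degree z).
have := max_poly_roots nz _ _ (rs := rs).
have -> : all (root (Pd (elt_degree z))) rs.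
  apply/allP => w /mapP[y yS ->]; apply: rt.
  have yV : (y : L) \in V by move: yS; rewrite /S /enum_mem mem_filter => /andP[].
  move: (hall y); rewrite yV /= => h; rewrite leqNgt; exact: h.
have -> : uniq rs by rewrite map_inj_uniq; [rewrite /S; exact: enum_uniq | move=> a b /addrI].
move=> /(_ isT isT); rewrite size_map cardV => hlt.
have hb := sum_bound (elt_degree z).
have : (q ^ (elt_degree z).+1 <= q ^ elt_degree x)%N by rewrite leq_pexp2l // ltnW // q_gt1.
rewrite /V in hlt; move: hlt sz hb; set a := (q ^ _)%N; set b := (q ^ _)%N; set s := (\sum_(_ < _) _)%N.
move: (size _) => k; lia.
Qed.

Lemma poly_mpoly (k : nat) (i0 : 'I_k) (v : 'I_k -> L) (p : {poly F}) :
  exists f : {mpoly F[k]}, mpoly_eval f v = (map_poly (in_alg L) p).[v i0].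
Proof.
exists (\sum_(j < size p) p`_j *: 'X_i0 ^+ j).
rewrite /mpoly_eval raddf_sum (horner_coef_wide _ (eq_leq (size_map_poly (in_alg L) p))).
apply: eq_bigr => j _; change (mmap (in_alg L) v (p`_j *: 'X_i0 ^+ j) = (map_poly (in_alg L) p)`_j * v i0 ^+ j). rewrite mmapZ rmorphXn /= coef_map.
by rewrite mmapX mmap1U.
Qed.
End S.

Theorem mainTheorem13 (F : finFieldType) (L : fieldExtType F) (n : nat)
  (hn : (2 <= n)%N) (r : 'I_n -> L)
  (hgen : <<1 & [seq r i | i : 'I_n]>>%VS = fullv)
  (hmono : forall i j : 'I_n, (i <= j)%N -> (elt_degree (r j) <= elt_degree (r i))%N)
  (hstrict : exists i j : 'I_n, val j = (val i).+1 /\ (elt_degree (r j) < elt_degree (r i))%N) :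
  exists f : {mpoly F[n.-1]},
    forall j : 'I_n, val j = n.-1 ->
      (elt_degree (r j) <
       elt_degree (r j + mpoly_eval f (fun i : 'I_n.-1 => r (widen_ord (leq_pred n) i))))%N.
Proof.
have hn1 : (n.-1 < n)%N by rewrite prednK // ltnW.
pose jn := Ordinal hn1.
have [i0 [j0 [hj hlt]]] := hstrict.
have hi0 : (i0 < n.-1)%N by have := ltn_ord j0; rewrite hj => h; rewrite -ltnS prednK // ltnW.
pose i' : 'I_n.-1 := Ordinal hi0.
have hw : widen_ord (leq_pred n) i' = i0 by apply: val_inj.
have hz : (elt_degree (r jn) < elt_degree (r i0))%N.
  apply: leq_ltn_trans hlt; apply: hmono => /=; rewrite -ltnS prednK ?(ltnW hn) //.
have [y /Fadjoin1_polyP [p ->] hy] := @key F L _ _ hz.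
have [f hf] := @poly_mpoly F L _ i' (fun i : 'I_n.-1 => r (widen_ord (leq_pred n) i)) p.
exists f => j hjv.
have -> : j = jn by apply: val_inj.
by rewrite hf hw.
Qed.
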